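(* For every integer $\ell\geq 3$, the cycle $C_{2\ell+1}$ is not probe $P_5$-free, but it is probe $P_6$-free.
   Context: All graphs are finite and simple. $C_n$ is the cycle on $n$ vertices and $P_t$ the path on $t$ vertices. A graph is $H$-free if it contains no induced subgraph isomorphic to $H$. A graph $G=(V,E)$ is probe $H$-free if there is an independent set $N$ of $G$ and a set $F\subseteq\binom{N}{2}$ such that the graph $(V,E\cup F)$ is $H$-free. *)

(* Defs.v *)
From mathcomp Require Import all_boot.
Set Implicit Arguments. Unset Strict Implicit. Unset Printing Implicit Defensive.

(* A (simple) graph on a finite vertex type T is given by its adjacency
   relation e : rel T (symmetric, irreflexive). *)

Definition cycle_rel (n : nat) : rel 'I_n :=
  fun i j => ((i.+1 %% n) == j) || ((j.+1 %% n) == i).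

Definition path_rel (t : nat) : rel 'I_t :=
  fun i j => (i.+1 == j) || (j.+1 == i).

Definition contains_induced (T U : finType) (e : rel T) (h : rel U) : Prop :=
  exists f : U -> T, injective f /\
    forall x y : U, x != y -> e (f x) (f y) = h x y.

Definition H_free (T U : finType) (e : rel T) (h : rel U) : Prop :=
  ~ contains_induced e h.

Definition independent (T : finType) (e : rel T) (N : {set T}) : Prop :=
  forall x y, x \in N -> y \in N -> ~~ e x y.

Definition add_edges (T : finType) (e : rel T) (F : {set {set T}}) : rel T :=
  fun x y => e x y || ((x != y) && ([set x; y] \in F)).

Definition probe_H_free (T U : finType) (e : rel T) (h : rel U) : Prop :=
  exists (N : {set T}) (F : {set {set T}}),
    independent e N /\
    (forall A, A \in F -> (A \subset N) /\ #|A| = 2) /\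
    H_free (add_edges e F) h.

Arguments cycle_rel n : clear implicits.
Arguments path_rel t : clear implicits.

(* Main.v *)
Require Import Defs.
From mathcomp Require Import all_boot zify.
Set Implicit Arguments. Unset Strict Implicit.


Definition V n (Hn : 0 < n) (k : nat) : 'I_n := Ordinal (ltn_pmod k Hn).

Lemma modS n a : (a %% n).+1 %% n = a.+1 %% n.
Proof. by rewrite -[in RHS]addn1 -modnDml addn1. Qed.

Lemma eqV n (Hn : 0 < n) u i j : i < n -> j < n -> (V Hn (u+i) == V Hn (u+j)) = (i == j).
Proof. by move=> Hi Hj; rewrite -val_eqE /= eqn_modDl !modn_small. Qed.

Lemma cycV n (Hn : 0 < n) u i j : i.+1 < n -> j.+1 < n ->
  cycle_rel n (V Hn (u+i)) (V Hn (u+j)) = (i.+1 == j) || (j.+1 == i).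
Proof.
move=> Hi Hj; rewrite /cycle_rel /= !modS -!addnS !eqn_modDl !modn_small //;
  by apply: ltnW.
Qed.

Lemma cycVS n (Hn : 0 < n) i : cycle_rel n (V Hn i) (V Hn i.+1).
Proof. by rewrite /cycle_rel /= modS eqxx. Qed.

Lemma VnE n (Hn : 0 < n) i : V Hn (i + n) = V Hn i.
Proof. by apply: val_inj; rewrite /= modnDr. Qed.

Lemma parity n (Hn : 0 < n) (N : {set 'I_n}) : odd n ->
  independent (cycle_rel n) N -> exists i, (V Hn i \notin N) && (V Hn i.+1 \notin N).
Proof.
move=> On Hind.
have [/existsP[i Hi]|/existsPn Hno] := boolP [exists i : 'I_n, (V Hn i \notin N) && (V Hn i.+1 \notin N)].
  by exists i.
exfalso.
have Hs i : (V Hn i.+1 \in N) = ~~ (V Hn i \in N).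
  have Hv : V Hn (V Hn i) = V Hn i by apply: val_inj; rewrite /= modn_mod.
  have Hv1 : V Hn (V Hn i).+1 = V Hn i.+1 by apply: val_inj; rewrite /= modS.
  have := Hno (V Hn i); rewrite Hv Hv1.
  have := Hind (V Hn i) (V Hn i.+1); rewrite cycVS.
  by case: (V Hn i \in N); case: (V Hn i.+1 \in N) => // /(_ isT isT).
have Hk k : (V Hn k \in N) = (V Hn 0 \in N) (+) odd k.
  elim: k => [|k IH]; first by rewrite addbF.
  by rewrite Hs IH /= addbN.
have := Hk (0 + n); rewrite VnE add0n On addbT.
by case: (V Hn 0 \in N).
Qed.

Definition pathN (i j : nat) : bool := (i.+1 == j) || (j.+1 == i).

Definition goodN (k : nat -> nat) : bool :=
  all (fun i => all (fun j => (i != j) ==>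
    [&& ((k i == 0) && (k j == 0)) ==> pathN i j,
        ((k i == 1) && (k j == 1)) ==> pathN i j &
        ((k i == 2) && (k j != 0)) ==> ~~ pathN i j]) (iota 0 6)) (iota 0 6).

Definition chk a b c d e f := goodN (fun i => nth 0 [:: a; b; c; d; e; f] i).

Lemma fin_all : all (fun a => all (fun b => all (fun c => all (fun d => all (fun e =>
  all (fun f => ~~ chk a b c d e f) (iota 0 3)) (iota 0 3)) (iota 0 3)) (iota 0 3))
  (iota 0 3)) (iota 0 3).
Proof. vm_compute. reflexivity. Qed.

Lemma goodN_false k : (forall i, k i < 3) -> ~~ goodN k.
Proof.
move=> Hb.
have Hk i : i \in iota 0 6 -> k i = nth 0 [:: k 0; k 1; k 2; k 3; k 4; k 5] i.
  by rewrite mem_iota; case: i => [|[|[|[|[|[|i]]]]]].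
have -> : goodN k = chk (k 0) (k 1) (k 2) (k 3) (k 4) (k 5).
  rewrite /chk /goodN; apply: eq_in_all => i Hi; apply: eq_in_all => j Hj.
  by rewrite -!Hk.
move: (Hb 0) (Hb 1) (Hb 2) (Hb 3) (Hb 4) (Hb 5).
move: (k 0) (k 1) (k 2) (k 3) (k 4) (k 5).
move=> a b c d e f Ha Hb' Hc Hd He Hf.
move: fin_all => /allP/(_ a); rewrite mem_iota => /(_ Ha).
move=> /allP/(_ b); rewrite mem_iota => /(_ Hb').
move=> /allP/(_ c); rewrite mem_iota => /(_ Hc).
move=> /allP/(_ d); rewrite mem_iota => /(_ Hd).
move=> /allP/(_ e); rewrite mem_iota => /(_ He).
move=> /allP/(_ f); rewrite mem_iota => /(_ Hf).
by [].
Qed.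

Lemma eqV7 n (Hn : 0 < n) (n7 : 7 <= n) u i j : i < 6 -> j < 6 ->
  (V Hn (u+i) == V Hn (u+j)) = (i == j).
Proof. move=> Hi Hj; apply: eqV; lia. Qed.

Lemma cycV7 n (Hn : 0 < n) (n7 : 7 <= n) u i j : i < 6 -> j < 6 ->
  cycle_rel n (V Hn (u+i)) (V Hn (u+j)) = (i.+1 == j) || (j.+1 == i).
Proof. move=> Hi Hj; apply: cycV; lia. Qed.

Lemma part1 l : 3 <= l -> ~ probe_H_free (cycle_rel (2 * l + 1)) (path_rel 5).
Proof.
move=> Hl [N [F [Hind [HF Hfree]]]]; apply: Hfree.
have Hn : 0 < 2 * l + 1 by rewrite addn1.
have n7 : 7 <= 2 * l + 1 by lia.
have On : odd (2 * l + 1) by rewrite addn1 /= oddM.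
have [i /andP[Hi Hi1]] := parity Hn On Hind.
set n := 2 * l + 1 in Hn n7 On Hi Hi1 Hind HF *.
set u := i + (n - 4).
have H4 : V Hn (u + 4) \notin N.
  by rewrite /u -addnA subnK ?VnE //; lia.
have H5 : V Hn (u + 5) \notin N.
  have -> : u + 5 = i.+1 + n by rewrite /u; lia.
  by rewrite VnE.
have notF x y : x \notin N -> ([set x; y] \in F) = false.
  move=> Hx; apply/negbTE/negP => /HF [/subsetP Hs _].
  by move/negP: Hx; apply; apply: Hs; rewrite !inE eqxx.
have notF' x y : y \notin N -> ([set x; y] \in F) = false.
  by move=> Hy; rewrite setUC; apply: notF.
have Hb5 (s : seq nat) : all (fun m => m < 6) s -> forall x : 'I_5, nth 0 s x < 6.
  move=> /allP Hs x; case: (ltnP x (size s)) => Hx.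
    by apply: Hs; apply: mem_nth.
  by rewrite nth_default.
case Hc: ([set V Hn (u + 3); V Hn (u + 1)] \in F).
- have Hc' : [set V Hn (u + 1); V Hn (u + 3)] \in F by rewrite setUC.
  have H1 : V Hn (u + 1) \in N.
    by have [/subsetP Hs _] := HF _ Hc; apply: Hs; rewrite !inE eqxx orbT.
  have H0 : V Hn (u + 0) \notin N.
    apply/negP => H0; have := Hind _ _ H0 H1.
    by rewrite addn0 addn1 cycVS.
  exists (fun x : 'I_5 => V Hn (u + nth 0 [:: 5; 4; 3; 1; 0] x)); split.
    move=> x y /eqP; rewrite eqV7 ?Hb5 //.
    by case: x => [[|[|[|[|[|x]]]]] Hx] //; case: y => [[|[|[|[|[|y]]]]] Hy] //= _;
      apply: val_inj.
  move=> x y; case: x => [[|[|[|[|[|x]]]]] Hx] //; case: y => [[|[|[|[|[|y]]]]] Hy] //= Hxy;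
  by rewrite /add_edges /path_rel /= cycV7 // ?eqV7 // ?(notF _ _ H4) ?(notF' _ _ H4)
      ?(notF _ _ H5) ?(notF' _ _ H5) ?(notF _ _ H0) ?(notF' _ _ H0) ?Hc ?Hc' ?andbF.
- have Hc' : ([set V Hn (u + 1); V Hn (u + 3)] \in F) = false by rewrite setUC.
  exists (fun x : 'I_5 => V Hn (u + nth 0 [:: 5; 4; 3; 2; 1] x)); split.
    move=> x y /eqP; rewrite eqV7 ?Hb5 //.
    by case: x => [[|[|[|[|[|x]]]]] Hx] //; case: y => [[|[|[|[|[|y]]]]] Hy] //= _;
      apply: val_inj.
  move=> x y; case: x => [[|[|[|[|[|x]]]]] Hx] //; case: y => [[|[|[|[|[|y]]]]] Hy] //= Hxy;
  by rewrite /add_edges /path_rel /= cycV7 // ?eqV7 // ?(notF _ _ H4) ?(notF' _ _ H4)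
      ?(notF _ _ H5) ?(notF' _ _ H5) ?Hc ?Hc' ?andbF.
Qed.

Lemma ar1 (a b m : nat) : a <= m -> b <= m -> m < a.+2 -> m < b.+2 -> a != b ->
  a.+1 = b \/ b.+1 = a.
Proof. move=> H1 H2 H3 H4 /eqP H5; lia. Qed.

Lemma ar2 a m : a < m -> a.+1 < m + 1.
Proof. by move=> H; rewrite addn1 ltnS. Qed.

Lemma ar3 v m : v < m + 1 -> v <= m.
Proof. by rewrite addn1 ltnS. Qed.

Lemma part2 l : 3 <= l -> probe_H_free (cycle_rel (2 * l + 1)) (path_rel 6).
Proof.
move=> Hl.
pose N := [set v : 'I_(2 * l + 1) | ~~ odd v && (v < 2 * l)].
pose FF := [set A : {set 'I_(2 * l + 1)} | (A \subset N) && (#|A| == 2)].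
have inN (v : 'I_(2 * l + 1)) : (v \in N) = ~~ odd v && (v < 2 * l) by rewrite inE.
have Hvn (v : 'I_(2 * l + 1)) : v <= 2 * l by apply: ar3; apply: ltn_ord.
have Hind : independent (cycle_rel (2 * l + 1)) N.
  move=> x y; rewrite !inN /cycle_rel => /andP[Ox Hx] /andP[Oy Hy].
  have Hx1 : x.+1 < 2 * l + 1 by lia.
  have Hy1 : y.+1 < 2 * l + 1 by lia.
  rewrite !modn_small //.
  apply/negP => /orP[] /eqP E.
    by move: Oy; rewrite -E /= Ox.
  by move: Ox; rewrite -E /= Oy.
rewrite /probe_H_free; exists N; exists FF; split; first exact Hind.
split; first by move=> A; rewrite inE => /andP[? /eqP].
move=> [f [Hinj Hf]].
set adj := add_edges (cycle_rel (2 * l + 1)) FF.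
have notF (x y : 'I_(2 * l + 1)) : x \notin N -> ([set x; y] \in FF) = false.
  move=> Hx; apply/negbTE; rewrite inE; apply/negP => /andP[/subsetP Hs _].
  by move/negP: Hx; apply; apply: Hs; rewrite !inE eqxx.
have KN (x y : 'I_(2 * l + 1)) : x != y -> x \in N -> y \in N -> adj x y.
  move=> Hxy Hx Hy; rewrite /adj /add_edges Hxy inE cards2 Hxy eqxx andbT /=.
  by rewrite subUset !sub1set Hx Hy orbT.
pose kind (v : 'I_(2 * l + 1)) := if v \in N then 0 else if v.+2 <= 2 * l then 2 else 1.
have kind1 (x : 'I_(2 * l + 1)) : kind x = 1 -> 2 * l < x.+2.
  by rewrite /kind; case: (x \in N) => //; case: ifP => // /negbT; rewrite -ltnNge.
have KS (x y : 'I_(2 * l + 1)) : x != y -> kind x = 1 -> kind y = 1 -> adj x y.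
  move=> Hxy /kind1 Hx /kind1 Hy.
  move: (Hvn x) (Hvn y) => Lx Ly.
  move: Hxy; rewrite -val_eqE /= => Hxy.
  rewrite /adj /add_edges /cycle_rel.
  have [E|E] := ar1 Lx Ly Hx Hy Hxy.
    by rewrite E (modn_small (ltn_ord y)) eqxx.
  by rewrite E (modn_small (ltn_ord x)) eqxx orbT.
have KB (x y : 'I_(2 * l + 1)) : kind x = 2 -> kind y != 0 -> ~~ adj x y.
  rewrite /kind; case Nx: (x \in N) => //; case: ifP => // Hx _.
  case Ny: (y \in N) => // _.
  rewrite /adj /add_edges notF ?Nx // andbF orbF.
  move: Nx Ny; rewrite !inN => Nx Ny.
  have Ox : odd x by move: Nx; rewrite (ltnW Hx) andbT => /negbFE.
  rewrite /cycle_rel; apply/negP => /orP[] /eqP E.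
    move: E; rewrite modn_small; last by apply: ar2; apply: ltnW.
    by move=> E; move: Ny; rewrite -E /= Ox /= Hx.
  have := Hvn y; rewrite leq_eqVlt => /orP[/eqP Ey|Ly].
    move: E; rewrite Ey -[(2 * l).+1]addn1 modnn => E.
    by move: Ox; rewrite -E.
  move: E; rewrite modn_small; last by apply: ar2.
  by move=> E; move: Ox; rewrite -E /= => Oy; move: Ny; rewrite Oy Ly.
pose k (m : nat) := kind (f (inord m)).
have := goodN_false (k := k).
have -> : goodN k.
  apply/allP => i; rewrite mem_iota add0n => Hi; apply/allP => j; rewrite mem_iota add0n => Hj.
  apply/implyP => Hij.
  have Hij' : (inord i : 'I_6) != inord j.
    by rewrite -val_eqE /= !inordK.
  have Hp : pathN i j = path_rel 6 (inord i) (inord j).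
    by rewrite /path_rel !inordK.
  have Hfij : f (inord i) != f (inord j).
    by apply/negP => /eqP /Hinj /eqP; apply/negP.
  rewrite Hp -Hf //.
  apply/and3P; split.
  - apply/implyP => /andP[/eqP Ki /eqP Kj].
    apply: KN => //.
      by move: Ki; rewrite /k /kind; case: (_ \in N) => //; case: ifP.
    by move: Kj; rewrite /k /kind; case: (_ \in N) => //; case: ifP.
  - by apply/implyP => /andP[/eqP Ki /eqP Kj]; apply: KS.
  - by apply/implyP => /andP[/eqP Ki Kj]; apply: KB.
move=> H; apply: negP (H _) _ => // m.
by rewrite /k /kind; case: (_ \in N) => //; case: ifP.
Qed.

Theorem mainTheorem9 (l : nat) : 3 <= l ->
  ~ probe_H_free (cycle_rel (2 * l + 1)) (path_rel 5) /\
  probe_H_free (cycle_rel (2 * l + 1)) (path_rel 6).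
Proof. by move=> Hl; split; [apply: part1 | apply: part2]. Qed.
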